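(* Let $D$ be a friendship digraph. If there is a vertex $v$ of $D$ such that $N^+(v)=V(D)-\{v\}$, then every vertex of $D$ other than $v$ has outdegree $2$.
   Context: All digraphs are finite and have neither loops nor parallel arcs (a pair of opposite arcs $(u,v)$ and $(v,u)$ is allowed). $N^+(v)$ denotes the set of out-neighbors of $v$. A friendship digraph is a nontrivial digraph (at least two vertices) in which any two distinct vertices have exactly one common out-neighbor. *)

(* Defs.v *)
From mathcomp Require Import all_boot.
Set Implicit Arguments. Unset Strict Implicit. Unset Printing Implicit Defensive.

(* A digraph on a finite vertex type T is given by its arc relation e
   (e u v means there is an arc (u,v)); loops are excluded by irreflexivity,
   parallel arcs are impossible in a relation, opposite arcs are allowed. *)
Definition loopless (T : finType) (e : rel T) : Prop := irreflexive e.

Definition outN (T : finType) (e : rel T) (v : T) : {set T} := [set w | e v w].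

Definition friendship_digraph (T : finType) (e : rel T) : Prop :=
  [/\ 1 < #|T|, loopless e &
      forall u v : T, u != v -> #|outN e u :&: outN e v| = 1].

(* Main.v *)
Require Import Defs.
From mathcomp Require Import all_boot.

Theorem corollary2p3 (T : finType) (e : rel T) :
  friendship_digraph e ->
  forall v : T, outN e v = [set: T] :\ v ->
  forall u : T, u != v -> #|outN e u| = 2.
Proof.
move=> [hT hl hf] v hv u huv.
have h1 : outN e u :&: outN e v = outN e u :\ v.
  by apply/setP => x; rewrite hv !inE andbT andbC.
have hc : #|outN e u :\ v| = 1 by rewrite -h1; apply: hf.
rewrite (cardsD1 v) hc.
case huv' : (v \in outN e u) => //.
exfalso.
have [w hw] := cards1P (introT eqP hc).
have hw' : w \in outN e u :\ v by rewrite hw inE.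
have euw : e u w by move: hw'; rewrite !inE => /andP [_].
have hwu : u != w by apply/eqP => E; rewrite E (hl w) in euw.
have := hf u w hwu.
move/eqP/cards1P => [x hx].
have : x \in outN e u :&: outN e w by rewrite hx inE.
rewrite inE => /andP [hxu hxw].
have : x \in outN e u :\ v.
  rewrite !inE; rewrite !inE in hxu huv'; rewrite hxu andbT; apply/eqP => E; by rewrite E huv' in hxu.
rewrite hw inE => /eqP E.
by move: hxw; rewrite E inE (hl w).
Qed.
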